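(* Let $\mathbf{k}$ be an algebraically closed field, $V=\mathbf{k}^n$, $G=\mathrm{GL}(V)$, $\underline{G}=G\ltimes V$. Let $(X,w)\in\mathcal{O}_{\lambda[q]}$ with $\lambda=(a_1\ge\dots\ge a_t>0)$. For $k\in\{0,1,\dots,t\}$, the enhanced number $\wp_k^{\lambda[q]}$ equals the maximum of $\dim\big(\mathbf{k}[X]\tilde w+\mathbf{k}[X]\nu_1+\dots+\mathbf{k}[X]\nu_k\big)$ as $\tilde w$ ranges over $w+\mathrm{im}\,X$ and $(\nu_1,\dots,\nu_k)$ ranges over $V^k$.
   Context: $\underline{G}$ is $G\times V$ with product $(g_1,v_1)(g_2,v_2)=(g_1g_2,g_1v_2+v_1)$ and adjoint action $\mathrm{Ad}(g,v)(X,w)=(gXg^{-1},-(gXg^{-1})v+gw)$. Write $\lambda=(b_1^{d_1}\cdots b_r^{d_r})$ with $b_1>\dots>b_r$ (each $b_i$ occurring $d_i>0$ times), $d_0=0$; an enhanced partition $\lambda[q]$ has $q\in\{d_0+\dots+d_{j-1}:1\le j\le r+1\}$. For a nilpotent of type $\lambda$ with Jordan basis $\{X^kv_i:1\le i\le t, 0\le k\le a_i-1\}$, $X^{a_i}v_i=0$, put $u_j=v_{d_1+\dots+d_j}$ ($1\le j\le r$), $u_{r+1}=0$; $\mathcal{O}_{\lambda[q]}$ is the $\underline{G}$-orbit of $(X,u_j)$ with $q=d_0+\dots+d_{j-1}$. With the convention $a_i=0$ for $i>t$, the enhanced number is $\wp_k^{\lambda[q]}=\sum_{i=1}^k a_i+\delta_{k+1,q}$,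 where $\delta_{k+1,q}=a_{k+1}$ if $k+1>q$ and $\delta_{k+1,q}=a_{k+1}-1$ otherwise. $\mathbf{k}[X]u$ denotes the span of $u,Xu,X^2u,\dots$. *)

(* Defs.v *)
From HB Require Import structures.
From mathcomp Require Import all_boot all_order all_algebra.
Set Implicit Arguments. Unset Strict Implicit. Unset Printing Implicit Defensive.
Import GRing.Theory.
Local Open Scope ring_scope.

(* A partition lambda = (a_1 >= ... >= a_t > 0) is a seq nat; a_i is 1-indexed,
   with a_i = 0 for i > t (and i = 0 unused). *)
Definition lam_a (lam : seq nat) (i : nat) : nat := nth 0%N lam i.-1.

Definition is_partition (lam : seq nat) : bool :=
  sorted geq lam && all (fun a => 0 < a)%N lam.

(* lambda = (b_1^{d_1} ... b_r^{d_r}) with b_1 > ... > b_r : b = undup lam. *)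
Definition lam_r (lam : seq nat) : nat := size (undup lam).
Definition lam_b (lam : seq nat) (i : nat) : nat := nth 0%N (undup lam) i.-1.
Definition lam_d (lam : seq nat) (i : nat) : nat :=
  if i == 0%N then 0%N else count_mem (lam_b lam i) lam.
Definition lam_s (lam : seq nat) (j : nat) : nat := (\sum_(0 <= i < j.+1) lam_d lam i)%N.

Definition enhanced_index (lam : seq nat) (q j : nat) : bool :=
  [&& (1 <= j)%N, (j <= lam_r lam + 1)%N & q == lam_s lam j.-1].

Section Lin.
Variables (F : fieldType) (n : nat).

Definition jordan_seq (X : 'M[F]_n) (lam : seq nat) (v : nat -> 'cV[F]_n)
  : seq 'cV[F]_n :=
  flatten [seq [seq X ^+ k *m v i | k <- iota 0 (lam_a lam i)] | i <- iota 1 (size lam)].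

Definition is_jordan_basis (X : 'M[F]_n) (lam : seq nat) (v : nat -> 'cV[F]_n) : Prop :=
  basis_of fullv (jordan_seq X lam v) /\
  (forall i, (1 <= i <= size lam)%N -> X ^+ (lam_a lam i) *m v i = 0).

Definition u_vec (lam : seq nat) (v : nat -> 'cV[F]_n) (j : nat) : 'cV[F]_n :=
  if (j <= lam_r lam)%N then v (lam_s lam j) else 0.

Definition Ad (g : 'M[F]_n) (v : 'cV[F]_n) (Xw : 'M[F]_n * 'cV[F]_n)
  : 'M[F]_n * 'cV[F]_n :=
  let X' := g *m Xw.1 *m invmx g in (X', - (X' *m v) + g *m Xw.2).

Definition in_enh_orbit (lam : seq nat) (q : nat) (X : 'M[F]_n) (w : 'cV[F]_n) : Prop :=
  exists (X0 : 'M[F]_n) (v0 : nat -> 'cV[F]_n) (j : nat) (g : 'M[F]_n) (v : 'cV[F]_n),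
    [/\ is_jordan_basis X0 lam v0, enhanced_index lam q j, g \in unitmx &
        (X, w) = Ad g v (X0, u_vec lam v0 j)].

(* k[X]u = span of u, Xu, X^2u, ... (powers X^m, m >= n, vanish as X is nilpotent;
   we take m < n) *)
Definition kX_span (X : 'M[F]_n) (u : 'cV[F]_n) : {vspace 'cV[F]_n} :=
  span [seq X ^+ m *m u | m <- iota 0 n].

End Lin.

Definition enh_num (lam : seq nat) (q k : nat) : nat :=
  ((\sum_(1 <= i < k.+1) lam_a lam i) +
   (if (q < k.+1)%N then lam_a lam k.+1 else (lam_a lam k.+1 - 1)))%N.

(* Main.v *)
Require Import Defs.
From HB Require Import structures.
From mathcomp Require Import all_boot all_order all_algebra all_field.
From mathcomp Require Import zify.
Set Implicit Arguments. Unset Strict Implicit. Unset Printing Implicit Defensive.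
Import GRing.Theory.
Local Open Scope ring_scope.

Ltac plia := (repeat match goal with H : context [?x.-1] |- _ => rewrite -(subn1 x) in H | |- context [?x.-1] => rewrite -(subn1 x) end); (try change (Equality.sort Datatypes_nat__canonical__eqtype_Equality) with nat in * ); lia.

Section Comb.
Variable lam : seq nat.
Hypothesis Hp : is_partition lam.

Local Notation a := (lam_a lam).
Local Notation t := (size lam).
Local Notation bs := (undup lam).

Lemma geq_tr : transitive geq.
Proof. by move=> x y z /= H1 H2; apply: leq_trans H2 H1. Qed.

Lemma Hs : sorted geq lam. Proof. by case/andP: Hp. Qed.
Lemma Hpos : all (fun x => 0 < x)%N lam. Proof. by case/andP: Hp. Qed.

Lemma a_mono i j : (1 <= i <= j)%N -> (a j <= a i)%N.
Proof.
move=> /andP [H1 H2]; rewrite /lam_a.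
case: (ltnP j.-1 t) => Hj; last by rewrite nth_default.
have H := sorted_leq_nth geq_tr (fun x => leqnn x) 0%N Hs.
have Hi' : i.-1 \in [pred n | (n < t)%N] by rewrite inE; plia.
have Hj' : j.-1 \in [pred n | (n < t)%N] by rewrite inE; plia.
by apply: (H _ _ Hi' Hj'); plia.
Qed.

Lemma a_out i : (t < i)%N -> a i = 0%N.
Proof. by move=> H; rewrite /lam_a nth_default //; plia. Qed.

Lemma a_gt0 i : (1 <= i <= t)%N -> (0 < a i)%N.
Proof.
move=> H; have /allP := Hpos; apply; rewrite /lam_a; apply: mem_nth; plia.
Qed.

Definition Ncnt c := count (fun x => c <= x)%N lam.

Lemma Lthr c i : (0 < c)%N -> (c <= nth 0%N lam i)%N = (i < Ncnt c)%N.
Proof.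
rewrite /Ncnt; move=> c0; have := Hs; elim: lam i => [|x s IH] i Hs' /=.
  by rewrite nth_nil; plia.
have Hs2 : sorted geq s := path_sorted Hs'.
have Hall : all (geq x) s := order_path_min geq_tr Hs'.
have Hc0 : ~~ (c <= x)%N -> count (fun y => c <= y)%N s = 0%N.
  move=> cx; apply/eqP; rewrite -leqn0 leqNgt -has_count; apply/hasPn => y ys.
  have := allP Hall y ys; rewrite /=; plia.
case: i => [|i] /=.
  by case cx: (c <= x)%N => //=; rewrite Hc0 ?cx.
rewrite IH //; case cx: (c <= x)%N => //=; rewrite Hc0 ?cx //.
Qed.

Lemma count_split c s : count (fun x => c <= x)%N s = (count (fun x => c.+1 <= x)%N s + count_mem c s)%N.
Proof.
elim: s => //= x s ->; case: (ltngtP c x) => H /=; try plia.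
Qed.

Lemma s0 : lam_s lam 0 = 0%N.
Proof. by rewrite /lam_s big_nat1. Qed.

Lemma sS j : lam_s lam j.+1 = (lam_s lam j + count_mem (lam_b lam j.+1) lam)%N.
Proof. by rewrite /lam_s big_nat_recr //=. Qed.

Lemma bs_sorted : sorted geq bs.
Proof. exact: (@subseq_sorted nat geq geq_tr _ _ (undup_subseq lam) Hs). Qed.

Lemma b_in j : (1 <= j <= lam_r lam)%N -> lam_b lam j \in lam.
Proof. by move=> H; rewrite /lam_b -mem_undup; apply: mem_nth; rewrite /lam_r in H; plia. Qed.

Lemma b_gt0 j : (1 <= j <= lam_r lam)%N -> (0 < lam_b lam j)%N.
Proof. by move=> H; have /allP := Hpos; apply; apply: b_in. Qed.

Lemma s_count j : (j <= lam_r lam)%N -> lam_s lam j = count (mem (take j bs)) lam.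
Proof.
elim: j => [|j IH] Hj; first by rewrite s0 take0 /=; elim: lam => //.
rewrite sS IH; last plia.
rewrite (take_nth 0%N); last by rewrite /lam_r in Hj.
rewrite -count_predUI.
have -> : count (predI (mem (take j bs)) (pred1 (lam_b lam j.+1))) lam = 0%N.
  apply/eqP; rewrite -leqn0 leqNgt -has_count; apply/hasPn => y _ /=.
  apply/negP => /andP [H1 /eqP H2]; subst y.
  move: H1; rewrite /lam_b /= in_take_leq; last by rewrite /lam_r in Hj; plia.
  by rewrite index_uniq ?undup_uniq // ltnn.
rewrite addn0; apply: eq_count => y /=.
by rewrite -cats1 mem_cat inE /lam_b /=.
Qed.

Lemma s_r : lam_s lam (lam_r lam) = t.
Proof.
rewrite s_count // take_size -count_predT; apply: eq_in_count => y ys /=.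
by rewrite mem_undup ys.
Qed.

Lemma s_N j : (1 <= j <= lam_r lam)%N -> lam_s lam j = Ncnt (lam_b lam j).
Proof.
move=> Hj; rewrite s_count; last plia.
apply: eq_in_count => x xl /=.
have xb : x \in bs by rewrite mem_undup.
rewrite in_take // /lam_b.
set i := index x bs.
have ir : (i < size bs)%N by rewrite index_mem.
have xi : nth 0%N bs i = x by rewrite nth_index.
have H := sorted_leq_nth geq_tr (fun x => leqnn x) 0%N bs_sorted.
rewrite /lam_r in Hj.
case: (ltnP i j) => Hij.
  rewrite -xi; symmetry; apply: H; rewrite ?inE; plia.
have le : (nth 0%N bs i <= nth 0%N bs j.-1)%N by apply: H; rewrite ?inE; plia.
have ne : nth 0%N bs i != nth 0%N bs j.-1.
  by rewrite nth_uniq ?undup_uniq //; plia.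
rewrite -xi; apply/esym/negbTE; rewrite -ltnNge ltn_neqAle le andbT. exact: ne.
Qed.

Lemma d_pos j : (1 <= j <= lam_r lam)%N -> (lam_s lam j.-1 < lam_s lam j)%N.
Proof.
move=> Hj; case: j Hj => // j Hj; rewrite sS /=.
suff : (0 < count_mem (lam_b lam j.+1) lam)%N by plia.
rewrite -has_count; apply/hasP; exists (lam_b lam j.+1); last by rewrite /= eqxx.
have := b_in Hj. done.
Qed.

Lemma s_le_t j : (j <= lam_r lam)%N -> (lam_s lam j <= t)%N.
Proof. by move=> H; rewrite s_count // count_size. Qed.


Lemma s_pos j : (1 <= j <= lam_r lam)%N -> (1 <= lam_s lam j <= t)%N.
Proof.
move=> H; have := d_pos H; have := s_le_t (j := j); plia.
Qed.

Lemma enh_small j k : (2 <= j <= lam_r lam)%N -> (k.+1 <= lam_s lam j.-1)%N ->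
  (a (lam_s lam j) < a k.+1)%N.
Proof.
move=> Hj Hk.
have Hj1 : (1 <= j.-1 <= lam_r lam)%N by plia.
set c := lam_b lam j.-1.
have c0 : (0 < c)%N := b_gt0 Hj1.
have Hq : lam_s lam j.-1 = Ncnt c := s_N Hj1.
have Hm := d_pos (j := j) ltac:(plia).
have L1 := Lthr (lam_s lam j.-1).-1 c0.
have L2 := Lthr (lam_s lam j).-1 c0.
have M := a_mono (i := k.+1) (j := lam_s lam j.-1) ltac:(plia).
rewrite -Hq in L1 L2.
move: L1 L2 M; rewrite /lam_a.
have -> : ((lam_s lam j.-1).-1 < lam_s lam j.-1)%N = true by plia.
have -> : ((lam_s lam j).-1 < lam_s lam j.-1)%N = false by plia.
plia.
Qed.

Lemma nonenh_eq j k : (1 <= j <= lam_r lam)%N -> (lam_s lam j.-1 <= k)%N ->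
  (k.+1 <= lam_s lam j)%N -> a (lam_s lam j) = a k.+1.
Proof.
move=> Hj Hk Hkm.
set c := lam_b lam j.
have c0 : (0 < c)%N := b_gt0 Hj.
have Hm : lam_s lam j = Ncnt c := s_N Hj.
have Hsplit := count_split c lam.
have HS := sS j.-1.
rewrite prednK in HS; last plia.
have Hc1 : Ncnt c.+1 = lam_s lam j.-1.
  move: Hsplit HS Hm; rewrite /Ncnt -/c; plia.
have L1 := Lthr (lam_s lam j).-1 c0.
have L2 := Lthr k (ltn0Sn c).
have M := a_mono (i := k.+1) (j := lam_s lam j) ltac:(plia).
rewrite -Hm in L1; rewrite Hc1 in L2.
move: L1 L2 M; rewrite /lam_a.
have -> : ((lam_s lam j).-1 < lam_s lam j)%N = true by plia.
have -> : (k < lam_s lam j.-1)%N = false by plia.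
move=> H1 /negbT H2 H3 /=; rewrite -ltnNge in H2; simpl in H3; plia.
Qed.

Lemma iota1 : iota 1 t = index_iota 1 t.+1.
Proof. by rewrite /index_iota subn1. Qed.

Lemma sum1 k : (k <= t)%N ->
  (\sum_(i <- iota 1 t) (a i - a k.+1) + k * a k.+1 = \sum_(1 <= i < k.+1) a i)%N.
Proof.
move=> Hk; set p := a k.+1.
rewrite iota1 (big_cat_nat _ (n := k.+1)) //=. 
have -> : (\sum_(k.+1 <= i < t.+1) (a i - p) = 0)%N.
  rewrite big_nat_cond big1 // => i /andP [/andP [H1 H2] _].
  have := a_mono (i := k.+1) (j := i) ltac:(plia); rewrite -/p; plia.
rewrite addn0.
have H : forall k', (k' <= k)%N -> (\sum_(1 <= i < k'.+1) (a i - p) + k' * p = \sum_(1 <= i < k'.+1) a i)%N.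
  elim => [|k' IH] Hk'; first by rewrite !big_geq.
  rewrite big_nat_recr //= [X in _ = X]big_nat_recr //=; have := IH ltac:(plia).
  have := a_mono (i := k'.+1) (j := k.+1) ltac:(plia); rewrite -/p mulSn; plia.
exact: H.
Qed.

Lemma sum2 (P : pred nat) :
  (\sum_(i <- iota 1 t) count (fun _ => P i) (iota 0 (a i)) = \sum_(1 <= i < t.+1 | P i) a i)%N.
Proof.
rewrite iota1 [RHS]big_mkcond; apply: eq_bigr => i _.
case: (P i); last by elim: (iota 0 (a i)).
by rewrite -[RHS](size_iota 0 (a i)) -count_predT.
Qed.

Lemma sum3 K : (1 <= K)%N ->
  (\sum_(1 <= i < t.+1 | i < K) a i = \sum_(1 <= i < K) a i)%N.
Proof.
move=> HK; case: (leqP K t.+1) => H.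
  by rewrite (big_nat_widen _ _ _ _ _ H).
rewrite [RHS](big_cat_nat _ (n := t.+1)) //=; last plia.
have -> : (\sum_(t.+1 <= i < K) a i = 0)%N.
  by rewrite big_nat_cond big1 // => i /andP [/andP [H1 H2] _]; rewrite a_out.
rewrite addn0.
rewrite big_nat_cond [RHS]big_nat_cond; apply: eq_bigl => i.
rewrite andbT; case: (boolP (0 < i < t.+1)%N) => //= Hi; plia.
Qed.

Lemma count_pos m : (count (fun l => 0 < l)%N (iota 0 m) = m - 1)%N.
Proof.
case: m => // m /=; rewrite subn1 /= -[RHS](size_iota 1 m) -count_predT.
by apply: eq_in_count => l; rewrite mem_iota /= => H; plia.
Qed.

Lemma sumW k : (k < t)%N ->
  (\sum_(i <- iota 1 t) count (fun l => (i != k.+1) || (0 < l))%N (iota 0 (a i)) =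
   \sum_(i <- iota 1 t) count (fun _ => i != k.+1) (iota 0 (a i)) + (a k.+1 - 1))%N.
Proof.
move=> Hk.
have -> : (a k.+1 - 1 = \sum_(i <- iota 1 t) (if i == k.+1 then a i - 1 else 0))%N.
  by rewrite -big_mkcond iota1 big_nat1_eq; case: ifP => //; plia.
rewrite -big_split; apply: eq_bigr => i _ /=.
case: eqP => [->|_] /=.
  by rewrite count_pos; elim: (iota 0 (a k.+1)).
by rewrite addn0.
Qed.

Lemma sumM k m : (k.+1 < m <= t)%N ->
  (\sum_(i <- iota 1 t) count (fun _ => (i < k.+1) || (i == m))%N (iota 0 (a i)) =
   \sum_(1 <= i < k.+1) a i + a m)%N.
Proof.
move=> Hm; rewrite sum2 big_mkcond.
rewrite (eq_bigr (fun i => (if (i < k.+1)%N then a i else 0) + (if i == m then a i else 0))%N); last first.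
  move=> i _; case: (ltnP i k.+1) => H /=; case: eqP => // E; subst; plia.
rewrite big_split /= -!big_mkcond sum3 // big_nat1_eq; case: ifP => //; plia.
Qed.

End Comb.

Lemma arith_fin (dS dC dM dV sN sW sV p s : nat) :
  (dS + dC = dM + dV)%N -> (sN <= dC)%N -> (sW <= dS)%N -> dV = sV -> sW = (sV + p)%N ->
  sN = s -> (s + p <= dM)%N.
Proof. lia. Qed.

Lemma subseq_flatten_map (T : Type) (U : eqType) (s : seq T) (f g : T -> seq U) :
  (forall x, subseq (f x) (g x)) -> subseq (flatten (map f s)) (flatten (map g s)).
Proof. by move=> H; elim: s => //= x s IH; apply: cat_subseq. Qed.

Lemma free_sub (K : fieldType) (vT : vectType K) (s B : seq vT) :
  free B -> uniq s -> {subset s <= B} -> free s.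
Proof.
move=> fB us sB.
have uB := free_uniq fB.
have P := permEl (perm_filterC (mem s) B).
move: fB; rewrite -(perm_free P) => /catl_free.
have Q : perm_eq [seq x <- B | mem s x] s.
  apply: uniq_perm; first by rewrite filter_uniq.
    done.
  move=> x; rewrite mem_filter; apply/idP/idP => [/andP[]//| xs].
  by apply/andP; split; [|apply: sB].
by rewrite (perm_free Q).
Qed.

Section Core.
Variables (F : fieldType) (n : nat) (X : 'M[F]_n) (lam : seq nat) (v : nat -> 'cV[F]_n).
Hypothesis HJ : is_jordan_basis X lam v.
Hypothesis Hp : is_partition lam.

Local Notation a := (lam_a lam).
Local Notation t := (size lam).
Local Notation B := (jordan_seq X lam v).

Definition Bsel (sel : nat -> nat -> bool) :=
  flatten [seq [seq X ^+ l *m v i | l <- iota 0 (a i) & sel i l] | i <- iota 1 t].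

Lemma Bsel_sub sel : subseq (Bsel sel) B.
Proof. by apply: subseq_flatten_map => i; apply: map_subseq; apply: filter_subseq. Qed.

Lemma freeB : free B. Proof. exact: basis_free HJ.1. Qed.

Lemma free_Bsel sel : free (Bsel sel).
Proof.
apply: free_sub freeB _ _; first exact: subseq_uniq (Bsel_sub sel) (free_uniq freeB).
exact: mem_subseq (Bsel_sub sel).
Qed.

Lemma dim_Bsel sel : \dim <<Bsel sel>> = size (Bsel sel).
Proof. exact: eqP (free_Bsel sel). Qed.

Lemma size_Bsel sel : size (Bsel sel) = (\sum_(i <- iota 1 t) count (sel i) (iota 0 (a i)))%N.
Proof.
rewrite size_flatten sumnE /shape -map_comp big_map; apply: eq_bigr => i _ /=.
by rewrite size_map size_filter.
Qed.

Lemma mem_Bsel (sel : nat -> nat -> bool) i l : (1 <= i <= t)%N -> (l < a i)%N -> sel i l -> X ^+ l *m v i \in Bsel sel.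
Proof.
move=> Hi Hl Hs; apply/flattenP.
exists [seq X ^+ l *m v i | l <- iota 0 (a i) & sel i l].
  by apply/mapP; exists i => //; rewrite mem_iota; lia.
by apply/mapP; exists l => //; rewrite mem_filter Hs mem_iota /=.
Qed.

Lemma memB_inv b : b \in B -> exists i l, [/\ (1 <= i <= t)%N, (l < a i)%N & b = X ^+ l *m v i].
Proof.
move/flattenP => [c /mapP [i Hi ->] /mapP [l Hl ->]].
exists i, l; move: Hi Hl; rewrite !mem_iota => Hi Hl; split => //; lia.
Qed.

Lemma B_full : <<B>>%VS = fullv. Proof. exact: span_basis HJ.1. Qed.

Lemma size_B : size B = n.
Proof.
have := eqP freeB; rewrite B_full dimvf /dim /= => <-. by rewrite muln1.
Qed.

Lemma Xv0 i m : (1 <= i <= t)%N -> (a i <= m)%N -> X ^+ m *m v i = 0.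
Proof.
move=> Hi Hm; rewrite -(subnK Hm) exprD -mulmxA.
by rewrite (HJ.2 i Hi) mulmx0.
Qed.


Definition Tl p :=
  flatten [seq [seq X ^+ l *m v i | l <- iota p (a i - p)] | i <- iota 1 t].

Lemma size_Tl p : size (Tl p) = (\sum_(i <- iota 1 t) (a i - p))%N.
Proof.
rewrite size_flatten sumnE /shape -map_comp big_map; apply: eq_bigr => i _ /=.
by rewrite size_map size_iota.
Qed.

Lemma XmT p m z : (p <= m)%N -> X ^+ m *m z \in <<Tl p>>%VS.
Proof.
move=> Hpm.
have zB : z \in <<B>>%VS by rewrite B_full memvf.
have -> : X ^+ m *m z = (linfun (mulmx (X ^+ m))) z by rewrite lfunE.
have sub : (linfun (mulmx (X ^+ m)) @: <<B>> <= <<Tl p>>)%VS.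
  rewrite limg_span; apply/span_subvP => b /mapP [b' b'B ->]; rewrite lfunE /=.
  have [i [l [Hi Hl ->]]] := memB_inv b'B.
  rewrite mulmxA (_ : X ^+ m *m X ^+ l = X ^+ (m + l)); last by rewrite exprD.
  case: (ltnP (m + l) (a i)) => H.
    apply: memv_span; apply/flattenP.
    exists [seq X ^+ l *m v i | l <- iota p (a i - p)].
      by apply/mapP; exists i => //; rewrite mem_iota; lia.
    by apply/mapP; exists (m + l)%N => //; rewrite mem_iota; lia.
  by rewrite (Xv0 Hi H) mem0v.
exact: (subvP sub) _ (memv_img _ zB).
Qed.

Definition kXM k wt (nu : 'I_k -> 'cV[F]_n) :=
  (kX_span X wt + \sum_(i < k) kX_span X (nu i))%VS.

Lemma upper_gen k p p' wt (nu : 'I_k -> 'cV[F]_n) :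
  (forall m, (p' <= m)%N -> X ^+ m *m wt \in <<Tl p>>%VS) ->
  (\dim (kXM wt nu) <= p' + k * p + size (Tl p))%N.
Proof.
move=> Hw.
set S := [seq X ^+ m *m wt | m <- iota 0 p'] ++
         flatten [seq [seq X ^+ m *m nu i | m <- iota 0 p] | i <- enum 'I_k].
have sub : (kXM wt nu <= <<S>> + <<Tl p>>)%VS.
  rewrite subv_add; apply/andP; split.
    apply/span_subvP => x /mapP [m _ ->]; case: (ltnP m p') => H.
      apply: (subvP (addvSl _ _)); apply: memv_span; rewrite mem_cat; apply/orP; left.
      by apply/mapP; exists m => //; rewrite mem_iota.
    by apply: (subvP (addvSr _ _)); apply: Hw.
  apply/subv_sumP => i _; apply/span_subvP => x /mapP [m _ ->]; case: (ltnP m p) => H.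
    apply: (subvP (addvSl _ _)); apply: memv_span; rewrite mem_cat; apply/orP; right.
    apply/flattenP; exists [seq X ^+ m *m nu i | m <- iota 0 p].
      by apply/mapP; exists i => //; rewrite mem_enum.
    by apply/mapP; exists m => //; rewrite mem_iota.
  by apply: (subvP (addvSr _ _)); apply: XmT.
apply: leq_trans (dimvS sub) _.
apply: leq_trans (dimv_add_leqif _ _).1 _.
apply: leq_add; last by apply: dim_span.
apply: leq_trans (dim_span _) _.
rewrite size_cat size_map size_iota size_flatten /shape -map_comp.
have -> : [seq (size \o (fun i : 'I_k => [seq X ^+ m *m nu i | m <- iota 0 p])) i | i <- enum 'I_k]
   = nseq k p.
  rewrite -[in RHS](size_enum_ord k); elim: (enum 'I_k) => //= i s IH.
  by rewrite size_map size_iota IH.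
by rewrite sumn_nseq mulnC.
Qed.


Lemma XXm m (z : 'cV[F]_n) : X ^+ m *m (X *m z) = X ^+ m.+1 *m z.
Proof. by rewrite exprSr -mulmxE mulmxA. Qed.

Lemma kX_mem z l : (l < n)%N -> X ^+ l *m z \in kX_span X z.
Proof. by move=> H; apply: memv_span; apply/mapP; exists l => //; rewrite mem_iota. Qed.

Lemma kXM_wt k wt (nu : 'I_k -> 'cV[F]_n) : (kX_span X wt <= kXM wt nu)%VS.
Proof. exact: addvSl. Qed.

Lemma kXM_nu k wt (nu : 'I_k -> 'cV[F]_n) x : (kX_span X (nu x) <= kXM wt nu)%VS.
Proof. by apply: subv_trans (addvSr _ _); apply: (sumv_sup x). Qed.

Lemma a_le_n i : (1 <= i <= t)%N -> (a i <= n)%N.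
Proof.
move=> Hi; rewrite -size_B.
apply: leq_trans (size_subseq (Bsel_sub (fun j _ => j == i))).
by rewrite size_Bsel sum2 big_nat1_eq; case: ifP => //; plia.
Qed.

Lemma Bsel_subM (sel : nat -> nat -> bool) (M : {vspace 'cV[F]_n}) :
  (forall i l, (1 <= i <= t)%N -> (l < a i)%N -> sel i l -> X ^+ l *m v i \in M) ->
  (<<Bsel sel>> <= M)%VS.
Proof.
move=> H; apply/span_subvP => b /flattenP [c /mapP [i Hi ->] /mapP [l Hl ->]].
move: Hi Hl; rewrite mem_iota mem_filter mem_iota => Hi /andP [Hs Hl].
apply: H => //; plia.
Qed.

Lemma core_upper q j k y (nu : 'I_k -> 'cV[F]_n) :
  enhanced_index lam q j -> (k <= t)%N ->
  (\dim (kXM (u_vec lam v j + X *m y) nu) <= enh_num lam q k)%N.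
Proof.
move=> /and3P [Hj1 Hj2 /eqP Hq] Hk.
set p := a k.+1.
set p' := if (q < k.+1)%N then p else (p - 1)%N.
have H : forall m, (p' <= m)%N -> X ^+ m *m (u_vec lam v j + X *m y) \in <<Tl p>>%VS.
  move=> m Hm; rewrite mulmxDr XXm; apply: memvD; last by apply: XmT; move: Hm; rewrite /p'; case: ifP; plia.
  case: (leqP p m) => Hpm; first exact: XmT.
  have Henh : (k.+1 <= q)%N by move: Hm; rewrite /p'; case: ifP; plia.
  rewrite /u_vec; case: ifP => Hjr; last by rewrite mulmx0 mem0v.
  have Hj2' : (2 <= j)%N.
    case: j Hj1 Hj2 Hq Hjr => // [] [|j] //= _ _; rewrite s0; plia.
  have := enh_small Hp (j := j) (k := k) ltac:(plia) ltac:(plia).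
  move=> Hsm; rewrite (Xv0 (s_pos Hp (j := j) ltac:(plia))) ?mem0v //.
  move: Hm Hpm Hsm; rewrite /p' /p; case: ifP; plia.
apply: leq_trans (upper_gen nu H) _.
rewrite size_Tl -addnA [(k * p + _)%N]addnC sum1 // /enh_num /p' /p.
by rewrite addnC.
Qed.


Lemma core_lower q j k : enhanced_index lam q j -> (k <= t)%N ->
  exists y (nu : 'I_k -> 'cV[F]_n),
    (enh_num lam q k <= \dim (kXM (u_vec lam v j + X *m y) nu))%N.
Proof.
move=> /and3P [Hj1 Hj2 /eqP Hq] Hk.
case: (ltnP q k.+1) => Hqk.
- have Henh : enh_num lam q k = (\sum_(1 <= i < k.+2) a i)%N.
    by rewrite /enh_num Hqk [RHS]big_nat_recr.
  case: (boolP ((j <= lam_r lam) && (k.+1 < lam_s lam j))%N) => [/andP [Hjr Hkm] | Hc].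
  + exists 0, (fun x => v x.+1).
    set m := lam_s lam j.
    rewrite mulmx0 addr0 /u_vec Hjr.
    have Hm := s_pos Hp (j := j) ltac:(plia).
    have E := nonenh_eq Hp (j := j) (k := k) ltac:(plia) ltac:(plia) ltac:(plia).
    apply: (leq_trans _ (dimvS (Bsel_subM (sel := (fun i _ => ((i < k.+1) || (i == m))%N)) _))).
      rewrite dim_Bsel size_Bsel (sumM Hp); last plia.
      by rewrite E /enh_num Hqk.
    move=> i l Hi Hl /orP [Hik | /eqP Him].
      have Hx : (i.-1 < k)%N by plia.
      apply: (subvP (kXM_nu _ _ (Ordinal Hx))) => /=.
      rewrite prednK; last plia.
      by apply: kX_mem; have := a_le_n Hi; plia.
    rewrite Him; apply: (subvP (kXM_wt _ _)).
    by apply: kX_mem; have := a_le_n Hi; plia.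
  + set m := if (j <= lam_r lam)%N then lam_s lam j else k.+1.
    have Hm1 : (1 <= m <= k.+1)%N.
      rewrite /m; case: ifP => Hjr //; last plia.
      have := s_pos Hp (j := j) ltac:(plia); move: Hc; rewrite Hjr /=; plia.
    have Hkt : ~~ (j <= lam_r lam)%N -> k = t.
      move=> Hjr; have Ej : j = (lam_r lam).+1 by plia.
      move: Hqk; rewrite Hq Ej /= s_r //; plia.
    pose f (x : nat) := if (x.+1 < m)%N then x.+1 else x.+2.
    exists 0, (fun x : 'I_k => v (f x)).
    rewrite mulmx0 addr0.
    apply: (leq_trans _ (dimvS (Bsel_subM (sel := (fun i _ => (i < k.+2)%N)) _))).
      by rewrite dim_Bsel size_Bsel sum2 sum3 // Henh.
    move=> i l Hi Hl /= Hik.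
    have Hln : (l < n)%N by have := a_le_n Hi; plia.
    case: (ltngtP i m) => Him.
    * have Hx : (i.-1 < k)%N by plia.
      apply: (subvP (kXM_nu _ _ (Ordinal Hx))) => /=.
      rewrite /f prednK; last plia.
      by rewrite Him; apply: kX_mem.
    * have Hx : (i.-2 < k)%N by plia.
      apply: (subvP (kXM_nu _ _ (Ordinal Hx))) => /=.
      rewrite /f ifF; last plia.
      have -> : (i.-2.+2 = i)%N by plia.
      by apply: kX_mem.
    * apply: (subvP (kXM_wt _ _)).
      have Hjr : (j <= lam_r lam)%N.
        apply/negPn/negP => Hjr; have := Hkt Hjr; move: Him Hi; rewrite /m ifF; [plia | exact: negbTE].
      by rewrite /u_vec Hjr Him /m Hjr; apply: kX_mem.
- have Hj2' : (2 <= j)%N.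
    case: j Hj1 Hj2 Hq => // [] [|j] //= _ _; rewrite s0; plia.
  have Hqt : (q <= t)%N by rewrite Hq; apply: s_le_t; plia.
  have Hkt : (k < t)%N by plia.
  exists (v k.+1), (fun x => v x.+1).
  set u := u_vec lam v j.
  set M := kXM (u + X *m v k.+1) (fun x : 'I_k => v x.+1).
  set N := Bsel (fun i _ => i < k.+1)%N.
  set V := Bsel (fun i _ => i != k.+1)%N.
  set W := Bsel (fun i l => (i != k.+1) || (0 < l))%N.
  have Hk1 : (1 <= k.+1 <= t)%N by plia.
  have XuV : forall l, X ^+ l *m u \in <<V>>%VS.
    rewrite /u /u_vec; case: ifP => Hjr; last by move=> l; rewrite mulmx0 mem0v.
    have Hm := s_pos Hp (j := j) ltac:(plia).
    have Hs := enh_small Hp (j := j) (k := k) ltac:(plia) ltac:(plia).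
    move=> l; case: (ltnP l (a (lam_s lam j))) => Hl.
      apply: memv_span; apply: mem_Bsel => //=.
      by apply/eqP => E; move: Hs; rewrite E ltnn.
    by rewrite Xv0 // mem0v.
  have HN : (<<N>> <= M :&: <<V>>)%VS.
    rewrite subv_cap; apply/andP; split; apply: Bsel_subM => i l Hi Hl /= Hik.
      have Hx : (i.-1 < k)%N by plia.
      apply: (subvP (kXM_nu _ _ (Ordinal Hx))) => /=.
      rewrite prednK; last plia.
      by apply: kX_mem; have := a_le_n Hi; plia.
    by apply: memv_span; apply: mem_Bsel => //=; plia.
  have HW : (<<W>> <= M + <<V>>)%VS.
    apply: Bsel_subM => i l Hi Hl /= Hs.
    case: (eqVneq i k.+1) => [Ei | Hne]; last first.
      by apply: (subvP (addvSr _ _)); apply: memv_span; apply: mem_Bsel => //=; rewrite Hne.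
    move: Hs Hl; rewrite Ei eqxx /=; case: l => // l _ Hl.
    have -> : X ^+ l.+1 *m v k.+1 = X ^+ l *m (u + X *m v k.+1) + - (X ^+ l *m u).
      by rewrite mulmxDr XXm addrAC subrr add0r.
    apply: memv_add; last by rewrite memvN.
    apply: (subvP (kXM_wt _ _)); apply: kX_mem; have := a_le_n Hk1; plia.
  have D := dimv_sum_cap M <<V>>%VS.
  have D1 : (size N <= \dim (M :&: <<V>>))%N by rewrite -dim_Bsel; exact: dimvS HN.
  have D2 : (size W <= \dim (M + <<V>>))%N by rewrite -dim_Bsel; exact: dimvS HW.
  have DV : \dim <<V>>%VS = size V by exact: dim_Bsel.
  have SW : size W = (size V + (a k.+1 - 1))%N by rewrite !size_Bsel sumW.
  have SN : size N = (\sum_(1 <= i < k.+1) a i)%N by rewrite size_Bsel sum2 sum3.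
  rewrite /enh_num ltnNge Hqk /=.
  exact: (arith_fin D D1 D2 DV SW SN).
Qed.

End Core.

Lemma conj_pow (F : fieldType) n (g A : 'M[F]_n) m : g \in unitmx ->
  (g *m A *m invmx g) ^+ m = g *m A ^+ m *m invmx g.
Proof.
move=> Hg; elim: m => [|m IH]; first by rewrite !expr0 mulmx1 mulmxV.
rewrite exprS IH -mulmxE !mulmxA -[g *m A *m invmx g *m g]mulmxA mulVmx // mulmx1.
by rewrite exprS -mulmxE !mulmxA.
Qed.

Lemma conj_dim (F : fieldType) n (g A : 'M[F]_n) k (z : 'cV[F]_n) (nu : 'I_k -> 'cV[F]_n) :
  g \in unitmx ->
  \dim (kX_span (g *m A *m invmx g) (g *m z) + \sum_(i < k) kX_span (g *m A *m invmx g) (g *m nu i))%VS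
  = \dim (kX_span A z + \sum_(i < k) kX_span A (nu i))%VS.
Proof.
move=> Hg.
set f := linfun (mulmx g : 'cV[F]_n -> 'cV[F]_n).
have Hs : forall z, kX_span (g *m A *m invmx g) (g *m z) = (f @: kX_span A z)%VS.
  move=> z'; rewrite /kX_span limg_span -map_comp; congr span; apply: eq_map => m /=.
  by rewrite lfunE /= conj_pow // -!mulmxA mulKmx.
rewrite Hs (eq_bigr _ (fun i _ => Hs (nu i))) -limg_sum -limgD limg_dim_eq //.
have /eqP -> : lker f == 0%VS.
  apply/lker0P => x y; rewrite !lfunE /= => E.
  by rewrite -(mulKmx Hg x) E mulKmx.
by rewrite capv0.
Qed.

Unset Implicit Arguments.

Theorem lemma3p9 (F : closedFieldType) (n : nat) (lam : seq nat) (q : nat)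
  (X : 'M[F]_n) (w : 'cV[F]_n)
  (Hlam : is_partition lam) (Horb : in_enh_orbit lam q X w)
  (k : nat) (Hk : (k <= size lam)%N) :
  (forall (y : 'cV[F]_n) (nu : 'I_k -> 'cV[F]_n),
     (\dim (kX_span X (w + X *m y) + \sum_(i < k) kX_span X (nu i))%VS
        <= enh_num lam q k)%N) /\
  (exists (y : 'cV[F]_n) (nu : 'I_k -> 'cV[F]_n),
     \dim (kX_span X (w + X *m y) + \sum_(i < k) kX_span X (nu i))%VS
        = enh_num lam q k).
Proof.
move: Horb => [X0 [v0 [j [g [vv [HJ Hidx Hg E]]]]]].
have EX := f_equal fst E; have Ew := f_equal snd E; rewrite /Ad /= in EX Ew.
set u := u_vec lam v0 j.
have key : forall y, w + X *m y = g *m (u + X0 *m (invmx g *m (y - vv))).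
  move=> y; rewrite Ew EX -/u mulmxDr !mulmxBr !mulmxA.
  by rewrite [- _ + g *m u]addrC -addrA [- _ + _]addrC.
split.
  move=> y nu.
  rewrite key (eq_bigr (fun i => kX_span X (g *m (invmx g *m nu i)))); last first.
    by move=> i _; rewrite mulKVmx.
  rewrite EX conj_dim //.
  exact: (core_upper HJ Hlam _ (fun i => invmx g *m nu i) Hidx Hk).
have [y' [nu' H]] := core_lower HJ Hlam Hidx Hk.
exists (vv + g *m y'), (fun i => g *m nu' i).
have -> : w + X *m (vv + g *m y') = g *m (u + X0 *m y').
  by rewrite key [vv + _]addrC addrK mulKmx.
rewrite EX conj_dim //.
apply/eqP; rewrite eqn_leq H andbT.
exact: (core_upper HJ Hlam _ nu' Hidx Hk).
Qed.
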